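(* Let $\mathcal{C}=(V,\mathcal{R})$ be a coherent configuration with fibers $X,Y$ such that $m=|X|=|Y|$ is a prime, $|\mathcal{R}_X|>2$ and $|\mathcal{R}_{X,Y}|>1$. If $S,T\in\mathcal{R}_{X,Y}$ and $R\in\mathcal{R}$ satisfy $ST^t=\{R\}$, then $c_{RR^t}^{R_1}\ge d_T$ for each $R_1\in SS^t$, and $c_{R^tR}^{R_2}\ge d_S$ for each $R_2\in TT^t$.
   Context: A coherent configuration is a pair $\mathcal{C}=(V,\mathcal{R})$ where $V$ is a finite set and $\mathcal{R}$ is a partition of $V\times V$ into nonempty sets such that: (1) the diagonal $\Delta_V$ is a union of members of $\mathcal{R}$; (2) for each $R\in\mathcal{R}$ its transpose $R^t=\{(u,v)\mid (v,u)\in R\}$ belongs to $\mathcal{R}$; (3) for all $R,S,T\in\mathcal{R}$ there is a constant $c_{RS}^T$ with $c_{RS}^T=|R(u)\cap S^t(v)|$ for all $(u,v)\in T$, where $T(w)=\{z\in V\mid (w,z)\in T\}$. A subset $X\subseteq V$ is a fiber if $\Delta_X\in\mathcal{R}$. For fibers $X,Y$, $\mathcal{R}_{X,Y}=\{R\in\mathcal{R}\mid R\subseteq X\times Y\}$, $\mathcal{R}_X=\mathcal{R}_{X,X}$, and for $R\in\mathcal{R}_{X,Y}$, $d_R=c_{RR^t}^{\Delta_X}=|R(x)|$ for any $x\in X$. Complex product: for $A,B\in\mathcal{R}$, $AB=\{R\in\mathcal{R}\mid c_{AB}^R>0\}$. *)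

(* Defs.v *)
From mathcomp Require Import all_boot.
Set Implicit Arguments. Unset Strict Implicit. Unset Printing Implicit Defensive.

Section CC.
Variable V : finType.

Definition rel_diag (X : {set V}) : {set V * V} :=
  [set p | (p.1 == p.2) && (p.1 \in X)].

Definition rel_tr (A : {set V * V}) : {set V * V} := [set p | (p.2, p.1) \in A].

Definition nbr (A : {set V * V}) (u : V) : {set V} := [set z | (u, z) \in A].

Definition cnt (R S : {set V * V}) (u v : V) : nat := #|nbr R u :&: nbr (rel_tr S) v|.

Definition is_coherent_configuration (Rs : {set {set V * V}}) : Prop :=
  [/\ partition Rs [set: V * V],
      (exists D : {set {set V * V}}, D \subset Rs /\ cover D = rel_diag [set: V]),
      (forall R, R \in Rs -> rel_tr R \in Rs) &
      (forall R S T, R \in Rs -> S \in Rs -> T \in Rs ->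
         forall u v u' v', (u, v) \in T -> (u', v') \in T -> cnt R S u v = cnt R S u' v')].

(* intersection number c_{RS}^T, evaluated at some pair of T (well defined by coherence) *)
Definition cnum (R S T : {set V * V}) : nat :=
  if [pick p in T] is Some p then cnt R S p.1 p.2 else 0.

Definition is_fiber (Rs : {set {set V * V}}) (X : {set V}) : Prop := rel_diag X \in Rs.

Definition rels_between (Rs : {set {set V * V}}) (X Y : {set V}) : {set {set V * V}} :=
  [set R in Rs | R \subset setX X Y].

Definition valency (X : {set V}) (R : {set V * V}) : nat := cnum R (rel_tr R) (rel_diag X).

Definition cprod (Rs : {set {set V * V}}) (A B : {set V * V}) : {set {set V * V}} :=
  [set R in Rs | 0 < cnum A B R].

End CC.

(* Main.v *)
Require Import Defs.
From mathcomp Require Import all_boot.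
Set Implicit Arguments. Unset Strict Implicit. Unset Printing Implicit Defensive.

Section H.
Variable V : finType.
Implicit Types (Rs : {set {set V * V}}) (A B Q : {set V * V}).

Lemma rel_trK A : rel_tr (rel_tr A) = A.
Proof. by apply/setP => [[a b]]; rewrite !inE. Qed.

Lemma coh_cnum Rs A B Q u v : is_coherent_configuration Rs ->
  A \in Rs -> B \in Rs -> Q \in Rs -> (u, v) \in Q -> cnum A B Q = cnt A B u v.
Proof.
case=> _ _ _ coh AR BR QR uvQ; rewrite /cnum; case: pickP => [[p1 p2] pQ|/(_ (u,v))].
  exact: coh pQ uvQ.
by rewrite uvQ.
Qed.

Lemma in_some Rs p : is_coherent_configuration Rs -> exists2 Q, Q \in Rs & p \in Q.
Proof.
case=> /and3P [/eqP cov _ _] _ _ _.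
have : p \in cover Rs by rewrite cov inE.
by move/bigcupP => [Q QR pQ]; exists Q.
Qed.

Lemma in_R Rs S T R x y z : is_coherent_configuration Rs ->
  S \in Rs -> T \in Rs -> cprod Rs S (rel_tr T) = [set R] ->
  (x, y) \in S -> (z, y) \in T -> (x, z) \in R.
Proof.
move=> CC SR TR HR xyS zyT.
have [Q QR xzQ] := in_some (x, z) CC.
have TtR : rel_tr T \in Rs by case: CC => _ _ tr _; exact: tr.
have : Q \in cprod Rs S (rel_tr T).
  rewrite inE QR /= (coh_cnum CC SR TtR QR xzQ) /cnt card_gt0.
  by apply/set0Pn; exists y; rewrite !inE /= xyS zyT.
by rewrite HR inE => /eqP <-.
Qed.

Lemma nbr_val Rs X T x : is_coherent_configuration Rs -> is_fiber Rs X ->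
  T \in Rs -> x \in X -> #|nbr T x| = valency X T.
Proof.
move=> CC FX TR xX.
have TtR : rel_tr T \in Rs by case: CC => _ _ tr _; exact: tr.
rewrite /valency (coh_cnum (u:=x) (v:=x) CC TR TtR FX); last by rewrite !inE eqxx.
by rewrite /cnt rel_trK setIid.
Qed.

Lemma card_nbr_sum A : \sum_x #|nbr A x| = \sum_z #|nbr (rel_tr A) z|.
Proof.
have E1 : forall x, #|nbr A x| = \sum_z ((x, z) \in A : nat).
  move=> x; rewrite -sum1_card big_mkcond /=; apply: eq_bigr => z _.
  by rewrite inE; case: ((x, z) \in A).
have E2 : forall z, #|nbr (rel_tr A) z| = \sum_x ((x, z) \in A : nat).
  move=> z; rewrite -sum1_card big_mkcond /=; apply: eq_bigr => x _.
  by rewrite !inE /=; case: ((x, z) \in A).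
rewrite (eq_bigr _ (fun x _ => E1 x)) (eq_bigr _ (fun z _ => E2 z)).
exact: exchange_big.
Qed.

Lemma nbr_tr_val Rs X Y T y : is_coherent_configuration Rs -> is_fiber Rs X ->
  is_fiber Rs Y -> 0 < #|X| -> #|X| = #|Y| ->
  T \in rels_between Rs X Y -> y \in Y -> #|nbr (rel_tr T) y| = valency X T.
Proof.
move=> CC FX FY X0 XY; rewrite inE => /andP [TR Tsub] yY.
have TtR : rel_tr T \in Rs by case: CC => _ _ tr _; exact: tr.
have S := card_nbr_sum T.
have L : \sum_x #|nbr T x| = #|X| * valency X T.
  rewrite (bigID (mem X)) /= [Z in _ + Z]big1; last first.
    move=> x xX; apply/eqP; rewrite cards_eq0; apply/eqP/setP => z.
    rewrite !inE; apply/negbTE/negP => /(subsetP Tsub); rewrite inE /=.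
    by rewrite (negbTE xX).
  rewrite addn0 (eq_bigr (fun _ => valency X T)); last first.
    by move=> x xX; exact: (nbr_val CC FX TR xX).
  by rewrite sum_nat_const.
have Rr : \sum_z #|nbr (rel_tr T) z| = #|Y| * valency Y (rel_tr T).
  rewrite (bigID (mem Y)) /= [Z in _ + Z]big1; last first.
    move=> z zY; apply/eqP; rewrite cards_eq0; apply/eqP/setP => x.
    rewrite !inE /=; apply/negbTE/negP => /(subsetP Tsub); rewrite inE /=.
    by rewrite (negbTE zY) andbF.
  rewrite addn0 (eq_bigr (fun _ => valency Y (rel_tr T))); last first.
    by move=> z zY; exact: (nbr_val CC FY TtR zY).
  by rewrite sum_nat_const.
rewrite (nbr_val CC FY TtR yY).
move: S; rewrite L Rr -XY => /eqP; rewrite eqn_mul2l.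
by rewrite eqn0Ngt X0 /= => /eqP ->.
Qed.

End H.

Theorem lemma3p6 (V : finType) (Rs : {set {set V * V}}) (X Y : {set V})
  (S T R : {set V * V}) :
  is_coherent_configuration Rs ->
  is_fiber Rs X -> is_fiber Rs Y ->
  prime #|X| -> #|X| = #|Y| ->
  2 < #|rels_between Rs X X| ->
  1 < #|rels_between Rs X Y| ->
  S \in rels_between Rs X Y -> T \in rels_between Rs X Y -> R \in Rs ->
  cprod Rs S (rel_tr T) = [set R] ->
  (forall R1, R1 \in cprod Rs S (rel_tr S) ->
     valency X T <= cnum R (rel_tr R) R1) /\
  (forall R2, R2 \in cprod Rs T (rel_tr T) ->
     valency X S <= cnum (rel_tr R) R R2).
Proof.
move=> CC FX FY pX XY _ _ SB TB RR HR.
have X0 : 0 < #|X| by apply: prime_gt0.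
have SR : S \in Rs by move: SB; rewrite inE => /andP [].
have TR : T \in Rs by move: TB; rewrite inE => /andP [].
have Ssub : S \subset setX X Y by move: SB; rewrite inE => /andP [].
have Tsub : T \subset setX X Y by move: TB; rewrite inE => /andP [].
split.
- move=> R1; rewrite inE => /andP [_]; rewrite /cnum.
  case: pickP => [[p1 p2] _|_] //=; rewrite /cnt card_gt0 => /set0Pn [y].
  rewrite !inE /= => /andP [p1y p2y].
  have yY : y \in Y by move: (subsetP Ssub _ p1y); rewrite inE => /andP [].
  rewrite -(nbr_tr_val CC FX FY X0 XY TB yY) rel_trK; apply: subset_leq_card.
  apply/subsetP => z; rewrite !inE /= => zyT.
  by rewrite (in_R CC SR TR HR p1y zyT) (in_R CC SR TR HR p2y zyT).
- move=> R2; rewrite inE => /andP [_]; rewrite /cnum.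
  case: pickP => [[p1 p2] _|_] //=; rewrite /cnt card_gt0 => /set0Pn [y].
  rewrite !inE /= => /andP [p1y p2y].
  have yY : y \in Y by move: (subsetP Tsub _ p1y); rewrite inE => /andP [].
  rewrite -(nbr_tr_val CC FX FY X0 XY SB yY); apply: subset_leq_card.
  apply/subsetP => z; rewrite !inE /= => zyS.
  by rewrite (in_R CC SR TR HR zyS p1y) (in_R CC SR TR HR zyS p2y).
Qed.
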